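(* Let $(S,d)$ be a connected metric space and $\bullet\in\{\mathrm{FM},\mathrm{BL}\}$. Then the set $J^S_\bullet$ consists of extreme points of $B^S_\bullet$ and is weak$^*$-dense in $\operatorname{ext}(B^S_\bullet)$.
   Context: $\mathrm{BL}(S)$ is the space of bounded real-valued Lipschitz functions on $S$, $|f|_L=\sup_{x\neq y}|f(x)-f(y)|/d(x,y)$, $\|f\|_{\mathrm{BL}}=\|f\|_\infty+|f|_L$, $\|f\|_{\mathrm{FM}}=\max(\|f\|_\infty,|f|_L)$, $B^S_\bullet=\{f\in\mathrm{BL}(S):\|f\|_\bullet\le1\}$, $\operatorname{ext}$ denotes the set of extreme points. For $f\in\mathrm{BL}(S)$, $M_f=\{x\in S:|f(x)|=\|f\|_\infty\}$. $J^S_{\mathrm{FM}}$ is the set of $f\in B^S_{\mathrm{FM}}$ with $\|f\|_\infty=1$ for which there is a finite non-empty $P_f\subset S$ such that for every $x\in S\setminus M_f$ there exists $p\in P_f$ with $|f(x)-f(p)|=d(x,p)$. $J^S_{\mathrm{BL}}=\{\mathbf{1},-\mathbf{1}\}\cup\hat J^S_{\mathrm{BL}}$, where $\hat J^S_{\mathrm{BL}}$ is the set of $f\in B^S_{\mathrm{BL}}$ with $\|f\|_{\mathrm{BL}}=1$, $f(M_f)=\{\|f\|_\infty,-\|f\|_\infty\}$, and for which there is a finite non-empty $P_f\subset S$ such that for every $x\in S\setminus M_f$ there exists $p\in P_f$ with $|f(x)-f(p)|=(1-\|f\|_\infty)d(x,p)$. The weak$^*$ topology on $\mathrm{BL}(S)$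 is $\sigma(\mathrm{BL}(S),X)$, where $X$ is the norm closure, in the dual of $(\mathrm{BL}(S),\|\cdot\|_\bullet)$, of the linear span of the point evaluations $f\mapsto f(x)$, $x\in S$. *)

(* Defs.v *)
From HB Require Import structures.
From mathcomp Require Import all_boot all_order all_algebra.
From mathcomp Require Import classical_sets boolp reals.
Set Implicit Arguments. Unset Strict Implicit. Unset Printing Implicit Defensive.
Import Order.TTheory GRing.Theory Num.Theory.
Local Open Scope ring_scope.
Local Open Scope classical_set_scope.

Record metric_space (R : realType) := MetricSpace {
  mcarrier :> Type;
  mdist : mcarrier -> mcarrier -> R;
  mdist_eq0 : forall x y, mdist x y = 0 <-> x = y;
  mdist_sym : forall x y, mdist x y = mdist y x;
  mdist_tri : forall x y z, mdist x z <= mdist x y + mdist y z }.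

Section Defs.
Variables (R : realType) (S : metric_space R).
Local Notation d := (@mdist R S).

Definition mopen (A : set S) : Prop :=
  forall x, A x -> exists e : R, 0 < e /\ forall y, d x y < e -> A y.
Definition mclosed (A : set S) : Prop := mopen (~` A).

Definition mconnected : Prop :=
  (exists x : S, True) /\
  forall A : set S, mopen A -> mclosed A -> A = set0 \/ A = setT.

Definition isBL (f : S -> R) : Prop :=
  (exists M : R, forall x, `|f x| <= M) /\
  (exists L : R, forall x y, `|f x - f y| <= L * d x y).

(* ||f||_oo  (sup of |f| ; the 0 makes it correct for empty S) *)
Definition supnorm (f : S -> R) : R :=
  sup [set r | r = 0 \/ exists x, r = `|f x|].

(* |f|_L  (sup over x <> y ; the 0 handles one-point spaces) *)
Definition lipconst (f : S -> R) : R :=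
  sup [set r | r = 0 \/ exists x y, x <> y /\ r = `|f x - f y| / d x y].

Inductive norm_kind := FM | BL.

Definition bnorm (k : norm_kind) (f : S -> R) : R :=
  match k with
  | FM => Num.max (supnorm f) (lipconst f)
  | BL => supnorm f + lipconst f
  end.

Definition ball1 (k : norm_kind) : set (S -> R) :=
  [set f | isBL f /\ bnorm k f <= 1].

Definition ext (C : set (S -> R)) : set (S -> R) :=
  [set f | C f /\ forall g h (t : R), C g -> C h -> 0 < t -> t < 1 ->
     f = (fun x => t * g x + (1 - t) * h x) -> g = h].

Definition Mset (f : S -> R) : set S := [set x | `|f x| = supnorm f].

Definition J_FM : set (S -> R) :=
  [set f | ball1 FM f /\ supnorm f = 1 /\
     exists (n : nat) (P : 'I_n.+1 -> S),
       forall x, ~ Mset f x -> exists i, `|f x - f (P i)| = d x (P i)].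

Definition Jhat_BL : set (S -> R) :=
  [set f | ball1 BL f /\ bnorm BL f = 1 /\
     f @` Mset f = [set y | y = supnorm f \/ y = - supnorm f] /\
     exists (n : nat) (P : 'I_n.+1 -> S),
       forall x, ~ Mset f x ->
         exists i, `|f x - f (P i)| = (1 - supnorm f) * d x (P i)].

Definition J_BL : set (S -> R) :=
  [set f | f = (fun _ => 1) \/ f = (fun _ => -1) \/ Jhat_BL f].

Definition Jset (k : norm_kind) : set (S -> R) :=
  match k with FM => J_FM | BL => J_BL end.

(* X: norm closure, in the dual of (BL(S), ||.||_k), of the span of the
   point evaluations.  phi (restricted to BL(S)) is in X iff for every e > 0
   there is a finite linear combination psi of point evaluations with
   |phi f - psi f| <= e * ||f||_k for all f in BL(S). *)
Definition inX (k : norm_kind) (phi : (S -> R) -> R) : Prop :=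
  forall e : R, 0 < e -> exists (m : nat) (a : 'I_m -> R) (p : 'I_m -> S),
    forall f, isBL f ->
      `|phi f - \sum_(i < m) a i * f (p i)| <= e * bnorm k f.

(* closure of A (a subset of BL(S)) in the weak* topology sigma(BL(S), X),
   via the basic neighbourhoods of f *)
Definition wstar_closure (k : norm_kind) (A : set (S -> R)) : set (S -> R) :=
  [set f | isBL f /\
     forall (n : nat) (phi : 'I_n -> ((S -> R) -> R)), (forall i, inX k (phi i)) ->
     forall e : R, 0 < e ->
       exists g, A g /\ forall i, `|phi i g - phi i f| < e].

End Defs.

(* Main.v *)
Require Import Defs.
From HB Require Import structures.
From mathcomp Require Import all_boot all_order all_algebra.
From mathcomp Require Import classical_sets boolp reals.
From Stdlib Require List.
From mathcomp Require Import ring lra.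
Import Order.TTheory GRing.Theory Num.Theory.
Local Open Scope ring_scope.
Local Open Scope classical_set_scope.

Section Main.
Variables (R : realType) (S : metric_space R).
Local Notation d := (@mdist R S).
Local Notation supnorm := (@supnorm R S).
Local Notation lipconst := (@lipconst R S).
Local Notation isBL := (@isBL R S).
Local Notation bnorm := (@bnorm R S).
Local Notation ball1 := (@ball1 R S).
Local Notation Mset := (@Mset R S).
Local Notation J_FM := (@J_FM R S).
Local Notation Jhat_BL := (@Jhat_BL R S).
Local Notation J_BL := (@J_BL R S).
Local Notation Jset := (@Jset R S).
Local Notation ext := (@ext R S).
Local Notation mconnected := (@mconnected R S).
Local Notation wstar_closure := (@wstar_closure R S).
Local Notation inX := (@inX R S).

Lemma normP (x : R) : (0 <= x /\ `|x| = x) \/ (x < 0 /\ `|x| = - x).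
Proof.
case: (lerP 0 x) => h; [left; split => //; exact: ger0_norm|right; split => //; exact: ltr0_norm].
Qed.

Lemma d_xx x : d x x = 0.
Proof. exact: (proj2 (mdist_eq0 x x) erefl). Qed.

Lemma d_ge0 x y : 0 <= d x y.
Proof. have := mdist_tri x y x. rewrite d_xx (mdist_sym y x). lra. Qed.

Lemma d_gt0 x y : x <> y -> 0 < d x y.
Proof.
move=> hxy; rewrite lt_def d_ge0 andbT; apply/eqP => /(proj1 (mdist_eq0 x y)); exact: hxy.
Qed.

Definition Lip (u : S -> R) (K : R) := forall x y, `|u x - u y| <= K * d x y.

Lemma Lip_mono u K K' : K <= K' -> Lip u K -> Lip u K'.
Proof. move=> hK hu x y; apply: (le_trans (hu x y)); apply: ler_wpM2r => //; exact: d_ge0. Qed.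

Lemma Lip_lin u v K1 K2 (a b : R) : Lip u K1 -> Lip v K2 ->
  Lip (fun x => a * u x + b * v x) (`|a| * K1 + `|b| * K2).
Proof.
move=> hu hv x y.
have -> : a * u x + b * v x - (a * u y + b * v y) = a * (u x - u y) + b * (v x - v y) by ring.
apply: (le_trans (ler_normD _ _)); rewrite !normrM mulrDl -!mulrA.
apply: lerD; apply: ler_wpM2l => //.
Qed.
Arguments Lip_lin {u v K1 K2} a b.

Lemma Lip_add u K c : Lip u K -> Lip (fun x => u x + c) K.
Proof. by move=> hu x y; have -> : u x + c - (u y + c) = u x - u y by ring. Qed.

Lemma finmin (l : seq R) (v : R) : exists2 e, 0 < e & forall r, r \in l -> r != v -> e <= `|r - v|.
Proof.
elim: l => [|r l [e he H]]; first by exists 1 => // r; rewrite in_nil.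
case: (eqVneq r v) => hr.
  exists e => // r'; rewrite inE => /orP[/eqP -> |]; first by rewrite hr eqxx.
  exact: H.
exists (Num.min e `|r - v|).
  by rewrite lt_min he /= normr_gt0 subr_eq0.
move=> r'; rewrite inE => /orP[/eqP -> _|hr' hne]; first by rewrite ge_min lexx orbT.
by rewrite ge_min (H _ hr' hne).
Qed.

Lemma finrange_const (u : S -> R) K (l : seq R) : mconnected -> Lip u K ->
  (forall x, u x \in l) -> forall x y, u x = u y.
Proof.
move=> [_ Hc] Hu Hl x y.
pose A := [set z | u z = u x].
have hK : 0 < `|K| + 1 by rewrite ltr_pwDr // normr_ge0.
have hKd : forall z w, `|u z - u w| <= `|K| * d z w.
  move=> z w; apply: (le_trans (Hu z w)); apply: ler_wpM2r; [exact: d_ge0|exact: ler_norm].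
have oA : mopen A.
  move=> z /= Hz.
  have [e he He] := finmin l (u x).
  exists (e / (`|K| + 1)); split; first exact: divr_gt0.
  move=> w dw /=.
  case: (eqVneq (u w) (u x)) => // hne; exfalso.
  have h1 := He _ (Hl w) hne.
  have h2 := hKd z w.
  rewrite ltr_pdivlMr // in dw.
  have h3 : `|u w - u x| = `|u z - u w| by rewrite Hz distrC.
  have h4 : 0 <= d z w := d_ge0 z w.
  have h5 : 0 <= `|K| * d z w by rewrite mulr_ge0 // normr_ge0.
  nra.
have cA : mclosed A.
  move=> z /= Hz.
  have hne : u z - u x != 0 by rewrite subr_eq0; apply/eqP.
  exists (`|u z - u x| / (`|K| + 1)); split; first by rewrite divr_gt0 // normr_gt0.
  move=> w dw /= Hw.
  rewrite ltr_pdivlMr // in dw.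
  have h2 := hKd z w.
  rewrite -Hw in dw.
  have h4 : 0 <= d z w := d_ge0 z w.
  have h5 : 0 <= `|K| * d z w by rewrite mulr_ge0 // normr_ge0.
  nra.
case: (Hc A oA cA) => HA.
  have : A x by [].
  by rewrite HA.
have : A y by rewrite HA.
by [].
Qed.


Lemma supnorm_ge f : isBL f -> 0 <= supnorm f /\ forall x, `|f x| <= supnorm f.
Proof.
move=> [[M HM] _].
have hs : has_sup [set r : R | r = 0 \/ exists x, r = `|f x|].
  split; first by exists 0; left.
  exists `|M| => r /= [->|[x ->]]; first exact: normr_ge0.
  exact: (le_trans (HM x) (ler_norm M)).
split; first by apply: sup_upper_bound => //; left.
by move=> x; apply: sup_upper_bound => //; right; exists x.
Qed.

Lemma supnorm_le f B : 0 <= B -> (forall x, `|f x| <= B) -> supnorm f <= B.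
Proof.
move=> hB hf; apply: ge_sup; first by exists 0; left.
by move=> r /= [->|[x ->]].
Qed.

Lemma lipconst_ge f : isBL f -> 0 <= lipconst f /\ Lip f (lipconst f).
Proof.
move=> [_ [L HL]].
have hs : has_sup [set r : R | r = 0 \/ exists x y, x <> y /\ r = `|f x - f y| / d x y].
  split; first by exists 0; left.
  exists `|L| => r /= [->|[x [y [hxy ->]]]]; first exact: normr_ge0.
  rewrite ler_pdivrMr; last exact: d_gt0.
  apply: (le_trans (HL x y)); apply: ler_wpM2r; [exact: d_ge0|exact: ler_norm].
split; first by apply: sup_upper_bound => //; left.
move=> x y.
case: (pselect (x = y)) => [<-|hxy]; first by rewrite subrr normr0 d_xx mulr0.
have : `|f x - f y| / d x y <= lipconst f.
  by apply: sup_upper_bound => //; right; exists x, y.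
by rewrite ler_pdivrMr //; exact: d_gt0.
Qed.

Lemma lipconst_le f K : 0 <= K -> Lip f K -> lipconst f <= K.
Proof.
move=> hK hf; apply: ge_sup; first by exists 0; left.
move=> r /= [->|[x [y [hxy ->]]]] //.
by rewrite ler_pdivrMr; [exact: hf|exact: d_gt0].
Qed.

Lemma lipconst_ge_elt f x y : isBL f -> x <> y -> `|f x - f y| / d x y <= lipconst f.
Proof.
move=> [_ [L HL]] hxy.
have hs : has_sup [set r : R | r = 0 \/ exists x y, x <> y /\ r = `|f x - f y| / d x y].
  split; first by exists 0; left.
  exists `|L| => r /= [->|[x' [y' [hxy' ->]]]]; first exact: normr_ge0.
  rewrite ler_pdivrMr; last exact: d_gt0.
  apply: (le_trans (HL x' y')); apply: ler_wpM2r; [exact: d_ge0|exact: ler_norm].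
by apply: sup_upper_bound => //; right; exists x, y.
Qed.

Lemma isBL_of f B K : (forall x, `|f x| <= B) -> Lip f K -> isBL f.
Proof. by move=> h1 h2; split; [exists B|exists K]. Qed.

Lemma ballFM_pt g : ball1 FM g -> (forall x, `|g x| <= 1) /\ Lip g 1.
Proof.
move=> [hg]; rewrite /bnorm ge_max => /andP[h1 h2].
have [_ hs] := supnorm_ge _ hg; have [_ hl] := lipconst_ge _ hg.
split; first by move=> x; exact: le_trans (hs x) h1.
exact: Lip_mono h2 hl.
Qed.

Lemma ballBL_pt g : ball1 BL g -> let a := supnorm g in
  0 <= a /\ a <= 1 /\ (forall x, `|g x| <= a) /\ Lip g (1 - a).
Proof.
move=> [hg]; rewrite /bnorm => h.
have [h0 hs] := supnorm_ge _ hg; have [l0 hl] := lipconst_ge _ hg.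
split => //; split; first lra.
split => //.
apply: Lip_mono hl; lra.
Qed.


Lemma conv_extreme (t A B al be : R) : 0 < t -> t < 1 -> `|A| <= al -> `|B| <= be ->
  `|t * A + (1 - t) * B| = t * al + (1 - t) * be ->
  (A = al /\ B = be) \/ (A = - al /\ B = - be).
Proof.
move=> t0 t1; rewrite !ler_norml => /andP[a1 a2] /andP[b1 b2].
have ht : 0 < 1 - t by lra.
case: (normP (t * A + (1 - t) * B)) => [[h0 ->]|[h0 ->]] he.
  have e1 : 0 <= t * (al - A) by apply: mulr_ge0; lra.
  have e2 : 0 <= (1 - t) * (be - B) by apply: mulr_ge0; lra.
  have e3 : t * (al - A) = 0 by lra.
  have e4 : (1 - t) * (be - B) = 0 by lra.
  move/eqP: e3; rewrite mulf_eq0 => /orP[/eqP|/eqP]; first lra.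
  move/eqP: e4; rewrite mulf_eq0 => /orP[/eqP|/eqP]; first lra.
  by left; split; lra.
have e1 : 0 <= t * (al + A) by apply: mulr_ge0; lra.
have e2 : 0 <= (1 - t) * (be + B) by apply: mulr_ge0; lra.
have e3 : t * (al + A) = 0 by lra.
have e4 : (1 - t) * (be + B) = 0 by lra.
move/eqP: e3; rewrite mulf_eq0 => /orP[/eqP|/eqP]; first lra.
move/eqP: e4; rewrite mulf_eq0 => /orP[/eqP|/eqP]; first lra.
by right; split; lra.
Qed.
Arguments conv_extreme {t A B al be}.

Lemma aux_bound (t H c : R) : 0 < t -> t < 1 -> `|H| <= 1 -> `|H + c| <= 1 ->
  `|H + t * c| <= 1 - t * (1 - t) * `|c|.
Proof.
move=> t0 t1; rewrite !ler_norml => /andP[a1 a2] /andP[b1 b2].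
have ht : 0 < 1 - t by lra.
case: (normP c) => [[c0 ->]|[c0 ->]].
  have f1 : 0 <= (1 - t) * (1 - t) * c by rewrite mulr_ge0 // mulr_ge0 //; lra.
  have f2 : 0 <= t * t * c by rewrite mulr_ge0 // mulr_ge0 //; lra.
  apply/andP; split; nra.
have f1 : 0 <= (1 - t) * (1 - t) * (- c) by rewrite mulr_ge0 // ?mulr_ge0 //; lra.
have f2 : 0 <= t * t * (- c) by rewrite mulr_ge0 // ?mulr_ge0 //; lra.
apply/andP; split; nra.
Qed.

Lemma Mset_dec f x : Mset f x \/ ~ Mset f x.
Proof. by case: (pselect (Mset f x)); [left|right]. Qed.

Lemma inmap_enum n (F : 'I_n -> R) (i : 'I_n) : F i \in [seq F j | j <- enum 'I_n].
Proof. by apply: map_f; rewrite mem_enum. Qed.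

Lemma JFM_ext f : mconnected -> J_FM f -> ext (ball1 FM) f.
Proof.
move=> hc [hf [s1 [n [P HP]]]]; split => // g h t Hg Hh t0 t1 Hfe.
have [g1 g2] := ballFM_pt _ Hg; have [h1 h2] := ballFM_pt _ Hh.
have fx : forall x, f x = t * g x + (1 - t) * h x by move=> x; rewrite Hfe.
pose u := fun x => g x - h x.
have hu : forall x, Mset f x -> u x = 0.
  move=> x; rewrite /Mset /= s1 => hx.
  have := conv_extreme t0 t1 (g1 x) (h1 x); rewrite -fx hx.
  have -> : t * 1 + (1 - t) * 1 = 1 by ring.
  by rewrite /u => /(_ erefl) [][-> ->]; rewrite subrr.
have hu2 : forall x, ~ Mset f x -> exists i, u x = u (P i).
  move=> x hx; have [i Hi] := HP x hx; exists i.
  have := conv_extreme t0 t1 (g2 x (P i)) (h2 x (P i)).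
  have -> : t * (g x - g (P i)) + (1 - t) * (h x - h (P i)) = f x - f (P i) by rewrite !fx; ring.
  rewrite Hi; have -> : t * (1 * d x (P i)) + (1 - t) * (1 * d x (P i)) = d x (P i) by ring.
  by move=> /(_ erefl) [][e1 e2]; rewrite /u; lra.
have Lu : Lip u (`|1| * 1 + `|-1| * 1).
  have := Lip_lin 1 (-1) g2 h2.
  by move=> H x y; have := H x y; rewrite /u !mul1r !mulN1r.
have cu := @finrange_const u _ (0 :: [seq u (P i) | i <- enum 'I_n.+1]) hc Lu.
have [[x0 _] _] := hc.
have cst : forall x, u x = u x0.
  move=> x; apply: cu => y; rewrite inE.
  case: (Mset_dec f y) => hy; first by rewrite hu // eqxx.
  have [i ->] := hu2 y hy; by rewrite inmap_enum orbT.
have c0 : u x0 = 0.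
  apply/eqP; apply: contraT => hne.
  have hpos : 0 < t * (1 - t) * `|u x0| by rewrite mulr_gt0 ?mulr_gt0 ?normr_gt0 //; lra.
  have hb : forall x, `|f x| <= 1 - t * (1 - t) * `|u x0|.
    move=> x; rewrite -(cst x) fx.
    have -> : t * g x + (1 - t) * h x = h x + t * u x by rewrite /u; ring.
    apply: aux_bound => //.
    by have -> : h x + u x = g x by rewrite /u; ring.
  have := @supnorm_le f (1 - t * (1 - t) * `|u x0|) ^~ hb.
  rewrite s1 => H.
  have : 0 <= 1 - t * (1 - t) * `|u x0| by exact: le_trans (normr_ge0 _) (hb x0).
  move=> /H; lra.
apply: funext => x; have := cst x; rewrite c0 /u => /eqP; rewrite subr_eq0 => /eqP //.
Qed.


Lemma Lip_ext u v K : (forall x, u x = v x) -> Lip u K -> Lip v K.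
Proof. by move=> e hu x y; rewrite -!e. Qed.

Lemma JBL_ext f : mconnected -> Jhat_BL f -> ext (ball1 BL) f.
Proof.
move=> hc [hf [hb1 [himg [n [P HP]]]]]; split => // g h t Hg Hh t0 t1 Hfe.
have hfB := proj1 hf.
move: hb1; rewrite /bnorm => hb1.
set s := supnorm f in himg HP hb1.
have [s0 hs] := supnorm_ge _ hfB; have [l0 hl] := lipconst_ge _ hfB.
have : [set y | y = s \/ y = -s] s by left.
rewrite -himg => -[x1 hx1 fx1].
have : [set y | y = s \/ y = -s] (-s) by right.
rewrite -himg => -[x2 hx2 fx2].
have sn0 : s != 0.
  apply/eqP => s00.
  have f0 : forall x, f x = 0 by move=> x; apply/eqP; rewrite -normr_eq0 eq_le normr_ge0 andbT -s00 hs.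
  have : lipconst f <= 0.
    apply: lipconst_le => // x y; rewrite !f0 subrr normr0 mul0r //.
  lra.
have sn1 : s != 1.
  apply/eqP => s1.
  have := hl x1 x2; rewrite fx1 fx2.
  have -> : lipconst f = 0 by lra.
  rewrite mul0r => H.
  have : `|s - - s| = 0 by apply/eqP; rewrite eq_le H normr_ge0.
  move/eqP; rewrite normr_eq0 opprK => /eqP; lra.
have sp : 0 < s by rewrite lt_def sn0.
have sl1 : s < 1 by rewrite lt_def eq_sym sn1 /=; lra.
have lf : lipconst f = 1 - s by lra.
rewrite lf in hl.
have [a0 [a1 [ga gl]]] := ballBL_pt _ Hg; have [b0 [b1 [ha hl2]]] := ballBL_pt _ Hh.
set a := supnorm g in a0 a1 ga gl; set b := supnorm h in b0 b1 ha hl2.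
have fx : forall x, f x = t * g x + (1 - t) * h x by move=> x; rewrite Hfe.
have sm1 : s <= t * a + (1 - t) * b.
  have := ga x1; have := ha x1; rewrite !ler_norml => /andP[_ e1] /andP[_ e2].
  have := fx x1; rewrite fx1 => ->.
  have : t * g x1 <= t * a by apply: ler_wpM2l; lra.
  have : (1 - t) * h x1 <= (1 - t) * b by apply: ler_wpM2l; lra.
  lra.
have sm : s = t * a + (1 - t) * b.
  case: (pselect (exists x i, ~ Mset f x /\ `|f x - f (P i)| = (1 - s) * d x (P i) /\ x <> P i)).
    move=> [x [i [_ [E hne]]]].
    have D0 := d_gt0 _ _ hne.
    have E2 : `|f x - f (P i)| <= t * ((1 - a) * d x (P i)) + (1 - t) * ((1 - b) * d x (P i)).
      have -> : f x - f (P i) = t * (g x - g (P i)) + (1 - t) * (h x - h (P i)) by rewrite !fx; ring.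
      apply: (le_trans (ler_normD _ _)); have nt : `|1 - t| = 1 - t by rewrite ger0_norm //; lra.
      rewrite !normrM (gtr0_norm t0) nt.
      apply: lerD; apply: ler_wpM2l; try lra; [exact: gl|exact: hl2].
    rewrite E in E2.
    have : (t * a + (1 - t) * b - s) * d x (P i) <= 0 by nra.
    rewrite pmulr_lle0 // => H; lra.
  move=> hno; exfalso.
  have cf := @finrange_const f _ (s :: - s :: [seq f (P i) | i <- enum 'I_n.+1]) hc hl.
  have : f x1 = f x2.
    apply: cf => y; rewrite !inE.
    case: (Mset_dec f y) => hy.
      have : (f @` Mset f) (f y) by exists y.
      by rewrite himg => -[->|->]; rewrite eqxx ?orbT.
    have [i Hi] := HP y hy.
    case: (pselect (y = P i)) => [->|hne]; first by rewrite inmap_enum !orbT.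
    by exfalso; apply: hno; exists y, i.
  rewrite fx1 fx2 => /eqP; rewrite -subr_eq0 opprK -mulr2n mulrn_eq0 /= => /eqP; lra.
have Mp : forall x, f x = s -> g x = a /\ h x = b.
  move=> x e; have := conv_extreme t0 t1 (ga x) (ha x).
  rewrite -fx e -sm (ger0_norm (ltW sp)).
  move=> /(_ erefl) [//|[e1 e2]]; exfalso; have := fx x; rewrite e1 e2 e; lra.
have Mn : forall x, f x = - s -> g x = - a /\ h x = - b.
  move=> x e; have := conv_extreme t0 t1 (ga x) (ha x).
  rewrite -fx e -sm normrN (ger0_norm (ltW sp)).
  move=> /(_ erefl) [[e1 e2]|//]; exfalso; have := fx x; rewrite e1 e2 e; lra.
pose w := fun x => (1 - s) * (g x - h x) - (b - a) * f x.
have Lw : Lip w (`|1| * (`|1 - s| * (1 - a) + `|- (1 - s)| * (1 - b)) + `|- (b - a)| * (1 - s)).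
  apply: Lip_ext (Lip_lin 1 (- (b - a)) (Lip_lin (1 - s) (- (1 - s)) gl hl2) hl).
  by move=> x; rewrite /w; ring.
have wN : forall x, ~ Mset f x -> exists i, w x = w (P i).
  move=> x hx; have [i Hi] := HP x hx; exists i.
  have := conv_extreme t0 t1 (gl x (P i)) (hl2 x (P i)).
  have -> : t * (g x - g (P i)) + (1 - t) * (h x - h (P i)) = f x - f (P i) by rewrite !fx; ring.
  rewrite Hi.
  have -> : t * ((1 - a) * d x (P i)) + (1 - t) * ((1 - b) * d x (P i)) = (1 - s) * d x (P i) by rewrite sm; ring.
  have E : w x - w (P i) = (1 - s) * ((g x - g (P i)) - (h x - h (P i))) -
     (b - a) * (t * (g x - g (P i)) + (1 - t) * (h x - h (P i))) by rewrite /w !fx; ring.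
  move: E; set A := g x - g (P i); set B := h x - h (P i) => E.
  move=> /(_ erefl) [[eA eB]|[eA eB]]; rewrite eA eB sm in E; apply/eqP; rewrite -subr_eq0 E; apply/eqP; ring.
have cw := @finrange_const w _ ((a - b) :: (b - a) :: [seq w (P i) | i <- enum 'I_n.+1]) hc Lw.
have wc : forall x y, w x = w y.
  apply: cw => y; rewrite !inE.
  case: (Mset_dec f y) => hy.
    have : (f @` Mset f) (f y) by exists y.
    rewrite himg => -[e|e].
      have [e1 e2] := Mp y e; apply/orP; left; apply/eqP; rewrite /w e1 e2 e; ring.
    have [e1 e2] := Mn y e; apply/orP; right; apply/orP; left; apply/eqP; rewrite /w e1 e2 e; ring.
  have [i ->] := wN y hy; by rewrite inmap_enum !orbT.
have w1 : w x1 = a - b by have [e1 e2] := Mp x1 fx1; rewrite /w e1 e2 fx1; ring.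
have w2 : w x2 = b - a by have [e1 e2] := Mn x2 fx2; rewrite /w e1 e2 fx2; ring.
have ab : a = b by have := wc x1 x2; rewrite w1 w2; lra.
apply: funext => x.
have := wc x x1; rewrite w1 /w ab subrr mul0r subr0 => /eqP.
rewrite mulf_eq0 subr_eq0 => /orP[/eqP|/eqP //]; lra.
Qed.


Lemma ball_const k (c : R) : `|c| <= 1 -> ball1 k (fun _ => c).
Proof.
move=> hc.
have hB : isBL (fun _ => c) by apply: (@isBL_of _ 1 0) => // x y; rewrite subrr normr0 mul0r.
have h1 : supnorm (fun _ => c) <= `|c| by apply: supnorm_le.
have h2 : lipconst (fun _ => c) <= 0 by apply: lipconst_le => // x y; rewrite subrr normr0 mul0r.
split => //.
case: k; rewrite /bnorm.
  by rewrite ge_max (le_trans h1 hc) /=; apply: (le_trans h2).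
lra.
Qed.

Lemma const_ext (c : R) : `|c| = 1 -> ext (ball1 BL) (fun _ => c).
Proof.
move=> hc; split; first by apply: ball_const; rewrite hc.
move=> g h t Hg Hh t0 t1 Hfe.
have [a0 [a1 [ga gl]]] := ballBL_pt _ Hg; have [b0 [b1 [ha hl2]]] := ballBL_pt _ Hh.
apply: funext => x.
have e : c = t * g x + (1 - t) * h x by have := congr1 (fun F => F x) Hfe.
have := conv_extreme t0 t1 (le_trans (ga x) a1) (le_trans (ha x) b1).
rewrite -e hc; have -> : t * 1 + (1 - t) * 1 = 1 by ring.
by move=> /(_ erefl) [[-> ->]|[-> ->]].
Qed.

Lemma part1 k : mconnected -> Jset k `<=` ext (ball1 k).
Proof.
move=> hc; case: k => f /=; first exact: JFM_ext.
case=> [->|[->|]]; last exact: JBL_ext.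
  by apply: const_ext; rewrite normr1.
by apply: const_ext; rewrite normrN normr1.
Qed.


Definition clamp (c y : R) := if y < - c then - c else if c < y then c else y.

Lemma clamp_cases (c y : R) : 0 <= c ->
  (y < - c /\ clamp c y = - c) \/ (c < y /\ clamp c y = c) \/ (- c <= y <= c /\ clamp c y = y).
Proof.
move=> c0; rewrite /clamp.
case: ltrP => h1; first by left.
case: ltrP => h2; first by right; left.
by right; right; split => //; apply/andP; split.
Qed.
Arguments clamp_cases {c} y.

Lemma clamp_bound c y : 0 <= c -> `|clamp c y| <= c.
Proof.
move=> c0; rewrite ler_norml.
case: (clamp_cases y c0) => [[h ->]|[[h ->]|[/andP[h1 h2] ->]]]; apply/andP; split; lra.
Qed.

Lemma clamp_lip c y z : 0 <= c -> `|clamp c y - clamp c z| <= `|y - z|.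
Proof.
move=> c0.
case: (clamp_cases y c0) => [[h ->]|[[h ->]|[/andP[h1 h2] ->]]];
case: (clamp_cases z c0) => [[h' ->]|[[h' ->]|[/andP[h1' h2'] ->]]];
rewrite !ler_norml; apply/andP; split; try lra;
  case: (normP (y - z)) => [[? ->]|[? ->]]; lra.
Qed.

Lemma clamp_id c y : - c <= y <= c -> clamp c y = y.
Proof.
move=> /andP[h1 h2]; have c0 : 0 <= c by lra.
case: (clamp_cases y c0) => [[h ->]|[[h ->]|[_ ->]]] //; lra.
Qed.

Lemma clamp_mono c y z : 0 <= c -> y <= z -> clamp c y <= clamp c z.
Proof.
move=> c0 yz.
case: (clamp_cases y c0) => [[h ->]|[[h ->]|[/andP[h1 h2] ->]]];
case: (clamp_cases z c0) => [[h' ->]|[[h' ->]|[/andP[h1' h2'] ->]]]; lra.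
Qed.

Lemma clamp_inner {c y} : 0 <= c -> `|clamp c y| < c -> clamp c y = y.
Proof.
move=> c0.
case: (clamp_cases y c0) => [[h ->]|[[h ->]|[/andP[h1 h2] ->]]] //;
  rewrite ?normrN ger0_norm // ltxx //.
Qed.

Lemma clamp_near c y eta : 0 <= c -> 0 <= eta -> `|y| <= c + eta -> `|clamp c y - y| <= eta.
Proof.
move=> c0 e0; rewrite ler_norml => /andP[a1 a2].
case: (clamp_cases y c0) => [[h ->]|[[h ->]|[/andP[h1 h2] ->]]];
  rewrite ler_norml; apply/andP; split; lra.
Qed.

Section MCS.
Variables (L c : R) (v : S -> R) (n : nat) (P : 'I_n.+1 -> S).
Hypotheses (L0 : 0 <= L) (c0 : 0 <= c) (vL : Lip v L) (vc : forall x, `|v x| <= c).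

Definition imin (x : S) : 'I_n.+1 := [arg min_(i < ord0) (v (P i) + L * d x (P i))]%O.
Definition mcsU (x : S) : R := v (P (imin x)) + L * d x (P (imin x)).
Definition mcsG (x : S) : R := clamp c (mcsU x).

Lemma mcsU_le x j : mcsU x <= v (P j) + L * d x (P j).
Proof.
rewrite /mcsU /imin; case: arg_minP => // i _ H; exact: H.
Qed.

Lemma mcsU_ge x : v x <= mcsU x.
Proof.
rewrite /mcsU; have := vL x (P (imin x)); rewrite ler_norml => /andP[_ h]; lra.
Qed.

Lemma mcsU_lip : Lip mcsU L.
Proof.
have H : forall x y, mcsU x <= mcsU y + L * d x y.
  move=> x y; apply: (le_trans (mcsU_le x (imin y))); rewrite /mcsU.
  have := mdist_tri x y (P (imin y)).
  move=> h; have : L * d x (P (imin y)) <= L * (d x y + d y (P (imin y))) by apply: ler_wpM2l.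
  lra.
move=> x y; rewrite ler_norml; apply/andP; split.
  have := H y x; rewrite mdist_sym; lra.
have := H x y; lra.
Qed.

Lemma mcsU_P j : mcsU (P j) = v (P j).
Proof.
apply/eqP; rewrite eq_le mcsU_ge andbT.
by have := mcsU_le (P j) j; rewrite d_xx mulr0 addr0.
Qed.

Lemma mcsG_bound x : `|mcsG x| <= c.
Proof. exact: clamp_bound. Qed.

Lemma mcsG_lip : Lip mcsG L.
Proof. move=> x y; apply: (le_trans (clamp_lip _ _ _ c0)); exact: mcsU_lip. Qed.

Lemma mcsG_P j : mcsG (P j) = v (P j).
Proof. by rewrite /mcsG mcsU_P clamp_id // -ler_norml. Qed.

Lemma mcsG_ge x : v x <= mcsG x.
Proof.
have -> : v x = clamp c (v x) by rewrite clamp_id // -ler_norml.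
apply: clamp_mono => //; exact: mcsU_ge.
Qed.

Lemma mcsG_slope x : `|mcsG x| < c -> exists i, `|mcsG x - mcsG (P i)| = L * d x (P i).
Proof.
move=> h; exists (imin x).
rewrite /mcsG in h *; rewrite (clamp_inner c0 h) -/(mcsG (P (imin x))) mcsG_P /mcsU.
have -> : v (P (imin x)) + L * d x (P (imin x)) - v (P (imin x)) = L * d x (P (imin x)) by ring.
by rewrite ger0_norm // mulr_ge0 // d_ge0.
Qed.

End MCS.
Arguments mcsG_ge {L c v n P}.
Arguments mcsG_slope {L c v n P}.
Arguments mcsG_P {L c v n P}.
Arguments mcsG_bound {L c v n P}.
Arguments mcsG_lip {L c v n P}.


Lemma mem_In (T : eqType) (x : T) (s : seq T) : x \in s -> List.In x s.
Proof. elim: s => //= y s IH; rewrite inE => /orP[/eqP ->|/IH]; by [left|right]. Qed.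

Lemma In_enum (T : finType) (x : T) : List.In x (enum T).
Proof. by apply: mem_In; rewrite mem_enum. Qed.

Lemma closure_of_approx k f : isBL f -> bnorm k f <= 1 ->
  (forall (l : seq S) (eta : R), 0 < eta -> exists g, Jset k g /\ isBL g /\ bnorm k g <= 1 /\
     forall q, List.In q l -> `|g q - f q| <= eta) ->
  wstar_closure k (Jset k) f.
Proof.
move=> hf hfb happ; split => // n phi hphi e e0.
have e4 : 0 < e / 4 by rewrite divr_gt0.
have : forall i : 'I_n, exists y : {m : nat & (('I_m -> R) * ('I_m -> S))%type},
    forall f, isBL f -> `|phi i f - \sum_(j < projT1 y) (projT2 y).1 j * f ((projT2 y).2 j)| <= e / 4 * bnorm k f.
  move=> i; have [m [a [p H]]] := hphi i _ e4.
  by exists (existT _ m (a, p)).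
move=> /choice [F HF].
pose K := \sum_(i < n) \sum_(j < projT1 (F i)) `|(projT2 (F i)).1 j|.
have K0 : 0 <= K by apply: sumr_ge0 => i _; apply: sumr_ge0 => j _; exact: normr_ge0.
have Kb : forall i, \sum_(j < projT1 (F i)) `|(projT2 (F i)).1 j| <= K.
  move=> i; rewrite /K (bigD1 i) //= lerDl; apply: sumr_ge0 => i' _; apply: sumr_ge0 => j _; exact: normr_ge0.
pose l := List.flat_map (fun i => List.map (projT2 (F i)).2 (enum 'I_(projT1 (F i)))) (enum 'I_n).
have Lin : forall i j, List.In ((projT2 (F i)).2 j) l.
  move=> i j; apply/List.in_flat_map; exists i; split; first exact: In_enum.
  by apply/List.in_map_iff; exists j; split => //; exact: In_enum.
have K1 : 0 < K + 1 by lra.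
have eta0 : 0 < e / 4 / (K + 1) by rewrite divr_gt0.
have [g [Jg [gB [gb gq]]]] := happ l _ eta0.
exists g; split => // i.
move: (HF i) (Kb i) (Lin i); case: (F i) => mi [ai pi] /= Hi Kbi Lini.
have E1 := Hi g gB; have E2 := Hi f hf.
have E3 : `|\sum_(j < mi) ai j * g (pi j) - \sum_(j < mi) ai j * f (pi j)| <= e / 4.
  rewrite -sumrB.
  apply: (le_trans (ler_norm_sum _ _ _)).
  apply: (@le_trans _ _ (\sum_(j < mi) `|ai j| * (e / 4 / (K + 1)))).
    apply: ler_sum => j _; rewrite -mulrBr normrM; apply: ler_wpM2l => //; exact: gq.
  rewrite -mulr_suml.
  apply: (@le_trans _ _ (K * (e / 4 / (K + 1)))); first by apply: ler_wpM2r => //; exact: ltW.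
  rewrite mulrA ler_pdivrMr // mulrC ler_wpM2l //; [exact: ltW|lra].
have E4 : e / 4 * bnorm k g <= e / 4 by rewrite ler_piMr //; exact: ltW.
have E5 : e / 4 * bnorm k f <= e / 4 by rewrite ler_piMr //; exact: ltW.
set A := \sum_(j < mi) ai j * g (pi j) in E1 E3; set B := \sum_(j < mi) ai j * f (pi j) in E2 E3.
have : `|phi i g - phi i f| <= `|phi i g - A| + `|A - B| + `|B - phi i f|.
  apply: (le_trans (ler_distD A _ _)); rewrite -addrA lerD2l.
  exact: ler_distD.
rewrite (distrC B); lra.
Qed.


Lemma cover (x0 : S) (l : seq S) q : List.In q (x0 :: l) ->
  exists k : 'I_(length l).+1, List.nth k (x0 :: l) x0 = q.
Proof.
move=> /(List.In_nth _ _ x0) [k [hk e]].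
have hk' : (k < (length l).+1)%N by apply/ssrnat.ltP.
by exists (Ordinal hk').
Qed.

Lemma ballFM_of g : (forall x, `|g x| <= 1) -> Lip g 1 -> ball1 FM g.
Proof.
move=> h1 h2; split; first exact: isBL_of h1 h2.
rewrite /bnorm ge_max; apply/andP; split; [exact: supnorm_le|exact: lipconst_le].
Qed.

Lemma sup_approx f (x0 : S) : isBL f -> forall eta, 0 < eta -> exists x, supnorm f - eta < `|f x|.
Proof.
move=> [[M HM] hL] eta e0.
have hs : has_sup [set r : R | r = 0 \/ exists x, r = `|f x|].
  split; first by exists 0; left.
  exists `|M| => r /= [->|[x ->]]; first exact: normr_ge0.
  exact: (le_trans (HM x) (ler_norm M)).
have [r [->|[x ->]] H] := sup_adherent e0 hs; last by exists x.
by exists x0; apply: (lt_le_trans H); exact: normr_ge0.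
Qed.

Lemma JFM_of G n (P : 'I_n.+1 -> S) : (forall x, `|G x| <= 1) -> Lip G 1 ->
  (forall dl, 0 < dl -> exists x, 1 - dl < `|G x|) ->
  (forall x, `|G x| < 1 -> exists i, `|G x - G (P i)| = d x (P i)) ->
  J_FM G /\ isBL G /\ bnorm FM G <= 1.
Proof.
move=> h1 h2 h3 h4.
have hb := ballFM_of _ h1 h2.
have hs : supnorm G = 1.
  apply/eqP; rewrite eq_le (@supnorm_le G 1 ler01 h1) /=.
  rewrite leNgt; apply/negP => hlt.
  have hp : 0 < 1 - supnorm G by lra.
  have [x hx] := h3 (1 - supnorm G) hp.
  have [_ hs] := supnorm_ge _ (proj1 hb); have := hs x; lra.
split; last by case: hb.
split => //; split => //; exists n, P => x hx.
have hlt : `|G x| < 1 by rewrite lt_neqAle h1 andbT; apply/eqP; rewrite -hs.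
have [i Hi] := h4 x hlt.
by exists i.
Qed.

Lemma Lip_opp u K : Lip u K -> Lip (fun x => - u x) K.
Proof. by move=> h x y; rewrite -opprD normrN. Qed.

Lemma extFM_sup1 f : mconnected -> ext (ball1 FM) f -> supnorm f = 1.
Proof.
move=> [[x0 _] _] [hf hext].
have [f1 f2] := ballFM_pt _ hf.
have [s0 hs] := supnorm_ge _ (proj1 hf).
have s1 : supnorm f <= 1 by apply: supnorm_le.
apply/eqP; rewrite eq_le s1 /=; rewrite leNgt; apply/negP => hlt.
pose ep := 1 - supnorm f.
have ep0 : 0 < ep by rewrite /ep; lra.
have bg : ball1 FM (fun x => f x + ep).
  apply: ballFM_of; last exact: Lip_add.
  move=> x; apply: (le_trans (ler_normD _ _)); rewrite (gtr0_norm ep0); have := hs x; rewrite /ep; lra.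
have bh : ball1 FM (fun x => f x + - ep).
  apply: ballFM_of; last exact: Lip_add.
  move=> x; apply: (le_trans (ler_normD _ _)); rewrite normrN (gtr0_norm ep0); have := hs x; rewrite /ep; lra.
have t0 : 0 < 1 / 2 :> R by rewrite divr_gt0.
have t1 : 1 / 2 < 1 :> R by rewrite ltr_pdivrMr //; lra.
have E : f = (fun x => 1 / 2 * (f x + ep) + (1 - 1 / 2) * (f x + - ep)).
  by apply: funext => x; field.
have := hext _ _ (1 / 2) bg bh t0 t1 E.
move=> /(congr1 (fun F => F x0)) /=; lra.
Qed.

Lemma FM_approx f : mconnected -> ext (ball1 FM) f ->
  forall (l : seq S) (eta : R), 0 < eta -> exists g, J_FM g /\ isBL g /\ bnorm FM g <= 1 /\
     forall q, List.In q l -> `|g q - f q| <= eta.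
Proof.
move=> hc he l eta e0.
have s1 := extFM_sup1 _ hc he.
have [[x0 _] _] := hc.
have [f1 f2] := ballFM_pt _ (proj1 he).
have fB := proj1 (proj1 he).
pose P := fun k : 'I_(length l).+1 => List.nth k (x0 :: l) x0.
have cov : forall q, List.In q l -> exists k, P k = q by move=> q hq; apply: cover; right.
case: (pselect (forall dl, 0 < dl -> exists x, 1 - dl < f x)) => hA.
  pose G := @mcsG 1 1 f _ P.
  have [J1 [J2 J3]] : J_FM G /\ isBL G /\ bnorm FM G <= 1.
    apply: (@JFM_of G _ P).
    - move=> x; exact: mcsG_bound.
    - exact: mcsG_lip.
    - move=> dl /hA [x hx]; exists x.
      have := mcsG_ge (P:=P) ler01 f2 f1 x; rewrite -/G => h.
      have := ler_norm (G x). lra.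
    - move=> x hx; have [i Hi] := mcsG_slope ler01 ler01 f2 f1 x hx.
      by exists i; rewrite Hi mul1r.
  exists G; split => //; split => //; split => // q /cov [k <-].
  by rewrite /G (mcsG_P f2 f1) subrr normr0; exact: ltW.
have [dl [dl0 hdl]] : exists dl, 0 < dl /\ forall x, f x <= 1 - dl.
  apply: contra_notP hA => H dl dl0; apply: contra_notP H => H.
  exists dl; split => // x; rewrite leNgt; apply/negP => hx; apply: H; by exists x.
have g1 : forall x, `|- f x| <= 1 by move=> x; rewrite normrN.
have g2 : Lip (fun x => - f x) 1 by exact: Lip_opp.
pose G' := @mcsG 1 1 (fun x => - f x) _ P.
pose G := fun x => - G' x.
have [J1 [J2 J3]] : J_FM G /\ isBL G /\ bnorm FM G <= 1.
  apply: (@JFM_of G _ P).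
  - move=> x; rewrite normrN; exact: mcsG_bound.
  - exact/Lip_opp/mcsG_lip.
  - move=> e' e'0.
    have hmin : 0 < Num.min e' dl by rewrite lt_min e'0 dl0.
    have [x hx] := sup_approx _ x0 fB _ hmin.
    exists x; rewrite normrN.
    have := mcsG_ge (P:=P) ler01 g2 g1 x; rewrite -/G' => h.
    have hm1 : Num.min e' dl <= e' by rewrite ge_min lexx.
    have hm2 : Num.min e' dl <= dl by rewrite ge_min lexx orbT.
    have := hdl x; rewrite s1 in hx.
    case: (normP (f x)) => [[_ E]|[_ E]]; rewrite E in hx.
      lra.
    move=> _; have := ler_norm (G' x); lra.
  - move=> x; rewrite normrN => hx; have [i Hi] := mcsG_slope ler01 ler01 g2 g1 x hx.
    by exists i; rewrite /G -opprD normrN Hi mul1r.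
exists G; split => //; split => //; split => // q /cov [k <-].
by rewrite /G /G' (mcsG_P g2 g1) opprK subrr normr0; exact: ltW.
Qed.


Lemma supnorm_neg f : supnorm (fun x => - f x) = supnorm f.
Proof.
rewrite /Defs.supnorm; congr sup; rewrite predeqE => r /=.
by split => -[->|[x ->]]; [left|right; exists x; rewrite normrN|left|right; exists x; rewrite normrN].
Qed.

Lemma lipconst_neg f : lipconst (fun x => - f x) = lipconst f.
Proof.
rewrite /Defs.lipconst; congr sup; rewrite predeqE => r /=.
by split => -[->|[x [y [hxy ->]]]]; [left|right; exists x, y; split => //; rewrite -opprD normrN|
  left|right; exists x, y; split => //; rewrite -opprD normrN].
Qed.

Lemma isBL_neg f : isBL f -> isBL (fun x => - f x).
Proof.
move=> [[M HM] [L HL]]; split; first by exists M => x; rewrite normrN.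
by exists L; apply: Lip_opp.
Qed.

Lemma ball_neg k f : ball1 k f -> ball1 k (fun x => - f x).
Proof.
move=> [hf hb]; split; first exact: isBL_neg.
by case: k hb; rewrite /bnorm supnorm_neg lipconst_neg.
Qed.

Lemma ext_neg k f : ext (ball1 k) f -> ext (ball1 k) (fun x => - f x).
Proof.
move=> [hf hext]; split; first exact: ball_neg.
move=> g h t Hg Hh t0 t1 E.
have E' : f = (fun x => t * (- g x) + (1 - t) * (- h x)).
  apply: funext => x; have := congr1 (fun F => F x) E => /= e.
  by rewrite -[f x]opprK e; ring.
have := hext _ _ _ (ball_neg _ _ Hg) (ball_neg _ _ Hh) t0 t1 E'.
move=> e; apply: funext => x; have := congr1 (fun F => F x) e => /= /eqP.
by rewrite eqr_opp => /eqP.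
Qed.

Lemma ballBL_of g A Lg : (forall x, `|g x| <= A) -> Lip g Lg -> 0 <= A -> 0 <= Lg ->
  A + Lg <= 1 -> ball1 BL g.
Proof.
move=> h1 h2 A0 L0 AL; split; first exact: isBL_of h1 h2.
rewrite /bnorm; have := supnorm_le _ _ A0 h1; have := lipconst_le _ _ L0 h2; lra.
Qed.

Lemma half_t : (0 < 1 / 2 :> R) /\ (1 / 2 < 1 :> R).
Proof. split; [by rewrite divr_gt0|by rewrite ltr_pdivrMr //; lra]. Qed.

Lemma extBL_nonzero f : mconnected -> ext (ball1 BL) f -> exists x, f x <> 0.
Proof.
move=> [[x0 _] _] [hf hext].
case: (pselect (exists x, f x <> 0)) => // H; exfalso.
have f0 : forall x, f x = 0 by move=> x; apply: contra_notP H => H; exists x.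
have [t0 t1] := half_t.
have h1 : `|1 / 2| <= 1 :> R by rewrite ger0_norm; lra.
have h2 : `|- (1 / 2)| <= 1 :> R by rewrite normrN ger0_norm; lra.
have E : f = (fun x => 1 / 2 * (1 / 2) + (1 - 1 / 2) * (- (1 / 2))).
  by apply: funext => x; rewrite f0; field.
have := hext _ _ _ (ball_const BL _ h1) (ball_const BL _ h2) t0 t1 E.
move=> /(congr1 (fun F => F x0)) /=; lra.
Qed.

Lemma extBL_norm1 f : mconnected -> ext (ball1 BL) f -> supnorm f + lipconst f = 1.
Proof.
move=> hc he; have [x1 hx1] := extBL_nonzero _ hc he.
move: he => [hf hext].
have fB := proj1 hf.
have [s0 hs] := supnorm_ge _ fB; have [l0 hl] := lipconst_ge _ fB.
have hb : supnorm f + lipconst f <= 1 by case: hf.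
apply/eqP; rewrite eq_le hb /= leNgt; apply/negP => hlt.
pose ep := 1 - (supnorm f + lipconst f).
have ep0 : 0 < ep by rewrite /ep; lra.
have ep1 : ep <= 1 by rewrite /ep; lra.
have bg : ball1 BL (fun x => (1 + ep) * f x).
  apply: (@ballBL_of _ ((1 + ep) * supnorm f) ((1 + ep) * lipconst f)).
  - move=> x; rewrite normrM ger0_norm; [apply: ler_wpM2l => //|]; lra.
  - apply: (@Lip_ext (fun x => (1 + ep) * f x + 0 * f x)); first by move=> x; ring.
    apply: Lip_mono (Lip_lin (1 + ep) 0 hl hl); rewrite normr0 mul0r addr0 ger0_norm //; lra.
  - apply: mulr_ge0 => //; lra.
  - apply: mulr_ge0 => //; lra.
  - rewrite -mulrDr; have : ep * (supnorm f + lipconst f) <= ep by rewrite ler_piMr //; lra.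
    rewrite /ep; nra.
have bh : ball1 BL (fun x => (1 - ep) * f x).
  apply: (@ballBL_of _ ((1 - ep) * supnorm f) ((1 - ep) * lipconst f)).
  - move=> x; rewrite normrM ger0_norm; [apply: ler_wpM2l => //|]; lra.
  - apply: (@Lip_ext (fun x => (1 - ep) * f x + 0 * f x)); first by move=> x; ring.
    apply: Lip_mono (Lip_lin (1 - ep) 0 hl hl); rewrite normr0 mul0r addr0 ger0_norm //; lra.
  - apply: mulr_ge0 => //; lra.
  - apply: mulr_ge0 => //; lra.
  - rewrite -mulrDr; have : 0 <= ep * (supnorm f + lipconst f) by apply: mulr_ge0; lra.
    nra.
have [t0 t1] := half_t.
have E : f = (fun x => 1 / 2 * ((1 + ep) * f x) + (1 - 1 / 2) * ((1 - ep) * f x)).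
  by apply: funext => x; field.
have := hext _ _ _ bg bh t0 t1 E.
move=> /(congr1 (fun F => F x1)) /= /eqP; rewrite -subr_eq0.
have -> : (1 + ep) * f x1 - (1 - ep) * f x1 = (2 * ep) * f x1 by ring.
rewrite mulf_eq0 => /orP[|/eqP //]; rewrite mulf_eq0 => /orP[|] /eqP; lra.
Qed.


Lemma Lip_affine u K (al be : R) : Lip u K -> Lip (fun x => al * u x + be) (`|al| * K).
Proof.
move=> h x y.
have -> : al * u x + be - (al * u y + be) = al * (u x - u y) by ring.
by rewrite normrM -mulrA; apply: ler_wpM2l => //; exact: normr_ge0.
Qed.

Lemma extBL_inf f : mconnected -> ext (ball1 BL) f -> (exists x, f x <> 1) ->
  forall eta, 0 < eta -> exists x, f x < - supnorm f + eta.
Proof.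
move=> hc he [x1 hx1].
have n1 := extBL_norm1 _ hc he.
have [[x0 _] _] := hc.
move: he => [hf hext].
have fB := proj1 hf.
have [s0 hs] := supnorm_ge _ fB; have [l0 hl] := lipconst_ge _ fB.
set s := supnorm f in n1 s0 hs *.
have lf : lipconst f = 1 - s by lra.
rewrite lf in hl.
case: (pselect (forall eta, 0 < eta -> exists x, f x < - s + eta)) => // H; exfalso.
have [eta [e0 He]] : exists eta, 0 < eta /\ forall x, - s + eta <= f x.
  apply: contra_notP H => H eta e0; apply: contra_notP H => H.
  exists eta; split => // x; rewrite leNgt; apply/negP => hx; apply: H; by exists x.
have s1 : s <= 1 by lra.
have e2 : eta <= 2 * s.
  have := He x0; have := hs x0; rewrite ler_norml => /andP[_ h]; lra.
pose ep := eta / 4.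
have ep0 : 0 < ep by rewrite /ep divr_gt0.
have epe : eta = 4 * ep by rewrite /ep; field.
have fxb : forall x, - s + eta <= f x <= s.
  move=> x; have := He x; have := hs x; rewrite ler_norml => /andP[_ h] h'; apply/andP; split => //.
have bg : ball1 BL (fun x => (1 + ep) * f x + - ep).
  apply: (@ballBL_of _ (s - ep * (1 - s)) ((1 + ep) * (1 - s))).
  - move=> x; rewrite ler_norml; have /andP[a1 a2] := fxb x.
    have p1 : 0 <= (1 + ep) * (s - f x) by apply: mulr_ge0; lra.
    have p2 : 0 <= (1 + ep) * (f x - (- s + eta)) by apply: mulr_ge0; lra.
    apply/andP; split; nra.
  - apply: Lip_mono (Lip_affine _ _ (1 + ep) (- ep) hl); rewrite ger0_norm //; lra.
  - have : ep * (1 - s) <= ep by rewrite ler_piMr //; lra.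
    lra.
  - apply: mulr_ge0; lra.
  - have -> : s - ep * (1 - s) + (1 + ep) * (1 - s) = 1 by ring.
    exact: lexx.
have bh : ball1 BL (fun x => (1 - ep) * f x + ep).
  apply: (@ballBL_of _ (s + ep * (1 - s)) ((1 - ep) * (1 - s))).
  - move=> x; rewrite ler_norml; have /andP[a1 a2] := fxb x.
    have p1 : 0 <= (1 - ep) * (s - f x) by apply: mulr_ge0; lra.
    have p2 : 0 <= (1 - ep) * (f x + s) by apply: mulr_ge0; lra.
    have p3 : 0 <= ep * (1 - s) by apply: mulr_ge0; lra.
    apply/andP; split; nra.
  - apply: Lip_mono (Lip_affine _ _ (1 - ep) ep hl); rewrite ger0_norm //; lra.
  - have : 0 <= ep * (1 - s) by apply: mulr_ge0; lra.
    lra.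
  - apply: mulr_ge0; lra.
  - have -> : s + ep * (1 - s) + (1 - ep) * (1 - s) = 1 by ring.
    exact: lexx.
have [t0 t1] := half_t.
have E : f = (fun x => 1 / 2 * ((1 + ep) * f x + - ep) + (1 - 1 / 2) * ((1 - ep) * f x + ep)).
  by apply: funext => x; field.
have := hext _ _ _ bg bh t0 t1 E.
move=> /(congr1 (fun F => F x1)) /= /eqP; rewrite -subr_eq0.
have -> : (1 + ep) * f x1 + - ep - ((1 - ep) * f x1 + ep) = (2 * ep) * (f x1 - 1) by ring.
rewrite mulf_eq0 => /orP[|/eqP]; last by move=> h; apply: hx1; lra.
rewrite mulf_eq0 => /orP[|] /eqP; lra.
Qed.

Lemma extBL_sup f : mconnected -> ext (ball1 BL) f -> (exists x, f x <> - 1) ->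
  forall eta, 0 < eta -> exists x, supnorm f - eta < f x.
Proof.
move=> hc he [x1 hx1] eta e0.
have he' := ext_neg _ _ he.
have ex1 : exists x, - f x <> 1.
  by exists x1 => h; apply: hx1; rewrite -[f x1]opprK h.
have [x hx] := extBL_inf _ hc he' ex1 _ e0.
by exists x; rewrite supnorm_neg in hx; lra.
Qed.


Lemma JBL_of G n (P : 'I_n.+1 -> S) (s' : R) : mconnected -> 0 < s' -> s' <= 1 ->
  (forall x, `|G x| <= s') -> Lip G (1 - s') ->
  (exists xp, G xp = s') -> (exists xm, G xm = - s') ->
  (forall x, `|G x| < s' -> exists i, `|G x - G (P i)| = (1 - s') * d x (P i)) ->
  Jhat_BL G /\ isBL G /\ bnorm BL G <= 1.
Proof.
move=> hc sp s1 h1 h2 [xp Gp] [xm Gm] h4.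
have hb : isBL G := isBL_of _ _ _ h1 h2.
have [_ hsG] := supnorm_ge _ hb.
have sG : supnorm G = s'.
  apply/eqP; rewrite eq_le (@supnorm_le G s' (ltW sp) h1) /=.
  by have := hsG xp; rewrite Gp ger0_norm //; exact: ltW.
have lle : lipconst G <= 1 - s' by apply: lipconst_le => //; lra.
have lge : 1 - s' <= lipconst G.
  case: (pselect (exists x i, `|G x| < s' /\ `|G x - G (P i)| = (1 - s') * d x (P i) /\ x <> P i)).
    move=> [x [i [_ [E hne]]]].
    have := lipconst_ge_elt _ _ _ hb hne; rewrite E mulfK //.
    by have := d_gt0 _ _ hne; rewrite lt_def => /andP[].
  move=> hno; exfalso.
  have cf := @finrange_const G _ (s' :: - s' :: [seq G (P i) | i <- enum 'I_n.+1]) hc h2.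
  have : G xp = G xm.
    apply: cf => y; rewrite !inE.
    case: (pselect (`|G y| < s')) => hy.
      have [i Hi] := h4 y hy.
      case: (pselect (y = P i)) => [->|hne]; first by rewrite inmap_enum !orbT.
      by exfalso; apply: hno; exists y, i.
    have hy' : `|G y| = s'.
      by apply/eqP; rewrite eq_le h1 /= leNgt; apply/negP.
    case: (normP (G y)) => [[_ E]|[_ E]]; rewrite E in hy'.
      by rewrite hy' eqxx.
    have -> : G y = - s' by lra.
    by rewrite eqxx orbT.
  rewrite Gp Gm; lra.
have bn : bnorm BL G = 1 by rewrite /bnorm sG; lra.
split; last by split => //; rewrite bn.
split; first by split => //; rewrite bn.
split => //; split.
  rewrite predeqE => y; split.
    move=> [x hx <-]; move: hx; rewrite /Mset /= sG.
    case: (normP (G x)) => [[_ ->]|[_ E]]; first by left.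
    by move=> hx; right; lra.
  have s0 : 0 <= s' by exact: ltW.
  move=> [->|->].
    exists xp; last by rewrite sG.
    rewrite /Mset /= sG Gp; exact: ger0_norm.
  exists xm; last by rewrite sG.
  rewrite /Mset /= sG Gm normrN; exact: ger0_norm.
exists n, P => x hx.
have hlt : `|G x| < s'.
  by rewrite lt_neqAle h1 andbT; apply/eqP => e; apply: hx; rewrite /Mset /= sG.
by rewrite sG; exact: h4.
Qed.

Lemma clamp_hi {c y} : 0 <= c -> c < y -> clamp c y = c.
Proof. by move=> c0 h; case: (clamp_cases y c0) => [[h' ->]|[[h' ->]|[/andP[_ h'] _]]] //; lra. Qed.

Lemma clamp_lo {c y} : 0 <= c -> y < - c -> clamp c y = - c.
Proof. by move=> c0 h; case: (clamp_cases y c0) => [[h' ->]|[[h' ->]|[/andP[h' _] _]]] //; lra. Qed.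

Lemma BL_approx f : mconnected -> ext (ball1 BL) f ->
  forall (l : seq S) (eta : R), 0 < eta -> exists g, J_BL g /\ isBL g /\ bnorm BL g <= 1 /\
     forall q, List.In q l -> `|g q - f q| <= eta.
Proof.
move=> hc he l eta e0.
have hf := proj1 he.
have fB := proj1 hf.
case: (pselect (forall x, f x = 1)) => H1.
  exists f; split; first by left; apply: funext.
  split => //; split; first by case: hf.
  by move=> q _; rewrite subrr normr0; exact: ltW.
case: (pselect (forall x, f x = - 1)) => H2.
  exists f; split; first by right; left; apply: funext.
  split => //; split; first by case: hf.
  by move=> q _; rewrite subrr normr0; exact: ltW.
have ex1 : exists x, f x <> 1.
  by apply: contra_notP H1 => H x; apply: contra_notP H => H; exists x.
have ex2 : exists x, f x <> - 1.
  by apply: contra_notP H2 => H x; apply: contra_notP H => H; exists x.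
have n1 := extBL_norm1 _ hc he.
have [x1 hx1] := extBL_nonzero _ hc he.
have [s0 hs] := supnorm_ge _ fB; have [l0 hl] := lipconst_ge _ fB.
set s := supnorm f in n1 s0 hs.
have lf : lipconst f = 1 - s by lra.
rewrite lf in hl.
have sp : 0 < s.
  apply: (lt_le_trans _ (hs x1)); rewrite normr_gt0; exact/eqP.
pose et := Num.min (s / 2) eta.
have et0 : 0 < et by rewrite lt_min e0 andbT divr_gt0.
have et1 : et <= s / 2 by rewrite ge_min lexx.
have et2 : et <= eta by rewrite ge_min lexx orbT.
have s2 : s / 2 < s by rewrite ltr_pdivrMr //; lra.
pose s' := s - et.
have s'0 : 0 < s' by rewrite /s'; lra.
have s'1 : s' <= 1 by rewrite /s'; lra.
pose L := 1 - s'.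
have L0 : 0 <= L by rewrite /L; lra.
pose f' := fun x => clamp s' (f x).
have f'L : Lip f' L.
  move=> x y; apply: (le_trans (clamp_lip _ _ _ (ltW s'0))); apply: (le_trans (hl x y)).
  apply: ler_wpM2r; [exact: d_ge0|rewrite /L /s'; lra].
have f'b : forall x, `|f' x| <= s' by move=> x; apply: clamp_bound; exact: ltW.
have [xp hxp] := extBL_sup _ hc he ex2 _ et0.
have [xm hxm] := extBL_inf _ hc he ex1 _ et0.
have fp : f' xp = s'.
  have hlt : s' < f xp by rewrite /s'; move: hxp; rewrite -/s; lra.
  by rewrite /f' (clamp_hi (ltW s'0) hlt).
have fm : f' xm = - s'.
  have hlt : f xm < - s' by rewrite /s'; move: hxm; rewrite -/s; lra.
  by rewrite /f' (clamp_lo (ltW s'0) hlt).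
pose P := fun k : 'I_(length (xm :: l)).+1 => List.nth k (xp :: xm :: l) xp.
have cov : forall q, List.In q (xp :: xm :: l) -> exists k, P k = q by move=> q hq; exact: cover.
pose G := @mcsG L s' f' _ P.
have GP : forall k, G (P k) = f' (P k) by move=> k; exact: (mcsG_P f'L f'b).
have [J1 [J2 J3]] : Jhat_BL G /\ isBL G /\ bnorm BL G <= 1.
  apply: (@JBL_of G _ P s') => //.
  - move=> x; exact: (mcsG_bound (ltW s'0)).
  - exact: (mcsG_lip L0 (ltW s'0)).
  - have [k hk] := cov xp (or_introl erefl); exists xp; by rewrite -hk GP hk.
  - have [k hk] := cov xm (or_intror (or_introl erefl)); exists xm; by rewrite -hk GP hk.
  - move=> x hx; exact: (mcsG_slope L0 (ltW s'0) f'L f'b x hx).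
exists G; split; first by right; right.
split => //; split => // q hq.
have [k hk] := cov q (or_intror (or_intror hq)).
rewrite -hk GP hk /f'.
apply: (le_trans _ et2); apply: clamp_near; [exact: ltW|exact: ltW|].
by rewrite /s'; have := hs q; lra.
Qed.

End Main.

Theorem corollary5p7 (R : realType) (S : metric_space R) (k : norm_kind) :
  mconnected S ->
  @Jset R S k `<=` ext (@ball1 R S k) /\
  ext (@ball1 R S k) `<=` wstar_closure k (@Jset R S k).
Proof.
move=> hc; split; first exact: part1.
move=> f he.
have [[hfB hfb] _] := he.
apply: closure_of_approx => // l eta e0.
case: k he hfb => he hfb.
  by have [g H] := FM_approx _ _ _ hc he l eta e0; exists g.
by have [g H] := BL_approx _ _ _ hc he l eta e0; exists g.
Qed.
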